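(* Let $m$ be even, $\Omega\subseteq\mathbb R^m$ open, and let $F\in\mathcal C^3(\Omega)$ take values in the $(m/2)$-vectors of $\mathbb R_{0,m}$. Then $F$ is inframonogenic in $\Omega$ if and only if both $F$ and $F(\underline x)\underline x$ are left $3$-monogenic in $\Omega$ (i.e. $\partial_{\underline x}^3F=0$ and $\partial_{\underline x}^3(F\underline x)=0$), and this holds if and only if both $F$ and $\underline xF(\underline x)$ are right $3$-monogenic in $\Omega$ (i.e. $F\partial_{\underline x}^3=0$ and $(\underline xF)\partial_{\underline x}^3=0$).
   Context: $\mathbb R_{0,m}$ is the $2^m$-dimensional real Clifford algebra generated by the orthonormal basis $e_1,\dots,e_m$ of $\mathbb R^m$ with relations $e_je_k+e_ke_j=-2\delta_{jk}$; it has basis $e_A=e_{j_1}\cdots e_{j_k}$, $A=\{j_1<\dots<j_k\}$, and the $k$-vectors are $\sum_{|A|=k}a_Ae_A$, $a_A\in\mathbb R$. A point of $\mathbb R^m$ is identified with $\underline x=\sum_j x_je_j$. The Dirac operator $\partial_{\underline x}=\sum_j e_j\partial_{x_j}$ acts from the left, $\partial_{\underline x}f=\sum_j e_j\partial_{x_j}f$, or from the right, $f\partial_{\underline x}=\sum_j(\partial_{x_j}f)e_j$; powers denote iterated application on the same side. $f\in\mathcal C^2$ is inframonogenic if $\partial_{\underline x}f\partial_{\underline x}=\sum_{i,j}e_i(\partial_{x_i}\partial_{x_j}f)e_j=0$. *)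

(* Defs.v *)
From Stdlib Require Import Reals ClassicalEpsilon.
From mathcomp Require Import all_boot.
Set Implicit Arguments. Unset Strict Implicit. Unset Printing Implicit Defensive.

Local Open Scope R_scope.

Definition pt (m : nat) := 'I_m -> R.

(* Elements of the Clifford algebra R_{0,m}: coefficient a_A of each basis
   blade e_A, A a subset of {1..m} (here {set 'I_m}). *)
Definition Cl (m : nat) := {set 'I_m} -> R.

Definition cl_zero (m : nat) : Cl m := fun _ => 0.
Definition cl_add (m : nat) (u v : Cl m) : Cl m := fun A => u A + v A.
Definition cl_sum (m : nat) (I : finType) (f : I -> Cl m) : Cl m :=
  fun A => \big[Rplus/0]_(i : I) f i A.

(* e_A e_B = sign(A,B) e_{A Δ B} with e_j e_k + e_k e_j = -2 δ_jk:
   sign = (-1)^(#{(a,b) in A x B | a > b} + #(A ∩ B)). *)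
Definition blade_sign (m : nat) (A B : {set 'I_m}) : R :=
  (-1) ^ (#|[set p : 'I_m * 'I_m | (p.1 \in A) && (p.2 \in B) && (p.2 < p.1)%N]|
          + #|A :&: B|)%nat.

Definition symdiff (m : nat) (A B : {set 'I_m}) : {set 'I_m} :=
  (A :\: B) :|: (B :\: A).

Definition cl_mul (m : nat) (u v : Cl m) : Cl m := fun C =>
  \big[Rplus/0]_(A : {set 'I_m}) \big[Rplus/0]_(B : {set 'I_m} | symdiff A B == C)
     (u A * v B * blade_sign A B).

Definition cl_e (m : nat) (j : 'I_m) : Cl m :=
  fun A => if A == [set j] then 1 else 0.
Definition cl_vec (m : nat) (x : pt m) : Cl m :=
  cl_sum (fun j : 'I_m => fun A => x j * cl_e j A).

Definition is_kvector (m k : nat) (u : Cl m) : Prop :=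
  forall A : {set 'I_m}, #|A| <> k -> u A = 0.

Definition shift (m : nat) (x : pt m) (j : 'I_m) (t : R) : pt m :=
  fun i => if i == j then x i + t else x i.

Definition is_open (m : nat) (Om : pt m -> Prop) : Prop :=
  forall x, Om x -> exists d, 0 < d /\
    forall y : pt m, (forall i, Rabs (y i - x i) < d) -> Om y.

Definition cont_on (m : nat) (Om : pt m -> Prop) (G : pt m -> R) : Prop :=
  forall x, Om x -> forall eps, 0 < eps -> exists d, 0 < d /\
    forall y, Om y -> (forall i, Rabs (y i - x i) < d) -> Rabs (G y - G x) < eps.

(* The partial derivative d/dx_j of a real function (its value, when it exists;
   derivatives are unique, so the choice is canonical). *)
Definition pd (m : nat) (j : 'I_m) (G : pt m -> R) (x : pt m) : R :=
  epsilon (inhabits 0) (fun l => derivable_pt_lim (fun t => G (shift x j t)) 0 l).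

Definition pdiff_on (m : nat) (Om : pt m -> Prop) (j : 'I_m) (G : pt m -> R) : Prop :=
  forall x, Om x -> exists l, derivable_pt_lim (fun t => G (shift x j t)) 0 l.

Fixpoint Ck (m : nat) (k : nat) (Om : pt m -> Prop) (G : pt m -> R) : Prop :=
  match k with
  | O => cont_on Om G
  | S k' => cont_on Om G /\ forall j, pdiff_on Om j G /\ Ck k' Om (pd j G)
  end.

Definition CkCl (m k : nat) (Om : pt m -> Prop) (F : pt m -> Cl m) : Prop :=
  forall A, Ck k Om (fun x => F x A).

Definition pdCl (m : nat) (j : 'I_m) (F : pt m -> Cl m) : pt m -> Cl m :=
  fun x A => pd j (fun y => F y A) x.

Definition dirac_l (m : nat) (F : pt m -> Cl m) : pt m -> Cl m :=
  fun x => cl_sum (fun j : 'I_m => cl_mul (cl_e j) (pdCl j F x)).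
Definition dirac_r (m : nat) (F : pt m -> Cl m) : pt m -> Cl m :=
  fun x => cl_sum (fun j : 'I_m => cl_mul (pdCl j F x) (cl_e j)).

Definition zero_on (m : nat) (Om : pt m -> Prop) (F : pt m -> Cl m) : Prop :=
  forall x, Om x -> forall A, F x A = 0.

Definition inframonogenic (m : nat) (Om : pt m -> Prop) (F : pt m -> Cl m) : Prop :=
  zero_on Om (fun x => cl_sum (fun p : 'I_m * 'I_m =>
     cl_mul (cl_mul (cl_e p.1) (pdCl p.1 (pdCl p.2 F) x)) (cl_e p.2))).

Definition left_3_monogenic (m : nat) (Om : pt m -> Prop) (F : pt m -> Cl m) : Prop :=
  zero_on Om (dirac_l (dirac_l (dirac_l F))).
Definition right_3_monogenic (m : nat) (Om : pt m -> Prop) (F : pt m -> Cl m) : Prop :=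
  zero_on Om (dirac_r (dirac_r (dirac_r F))).

(* Main.v *)
Require Import Defs.
From HB Require Import structures.
From Stdlib Require Import Reals Lra ClassicalEpsilon FunctionalExtensionality.
From mathcomp Require Import all_boot.
Set Implicit Arguments. Unset Strict Implicit. Unset Printing Implicit Defensive.
Set Warnings "-notation-overridden,-redundant-canonical-projection".
Local Open Scope R_scope.

HB.instance Definition _ := Monoid.isComLaw.Build R 0 Rplus
  (fun a b c => esym (Rplus_assoc a b c)) Rplus_comm Rplus_0_l.

Notation "\rsum_ ( i : I ) F" := (\big[Rplus/0]_(i : I) F)
  (at level 41, F at level 41, i, I at level 50, only parsing).

Lemma sumD (I : finType) (f g : I -> R) :
  \big[Rplus/0]_(i:I) (f i + g i) = \big[Rplus/0]_i f i + \big[Rplus/0]_i g i.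
Proof. by rewrite big_split. Qed.

Lemma sum_mulr (I : finType) (P : pred I) (c : R) (f : I -> R) :
  \big[Rplus/0]_(i | P i) (c * f i) = c * \big[Rplus/0]_(i | P i) f i.
Proof. elim/big_rec2: _ => [|i y1 y2 _ ->]; lra. Qed.

Lemma sum_mull (I : finType) (P : pred I) (c : R) (f : I -> R) :
  \big[Rplus/0]_(i | P i) (f i * c) = (\big[Rplus/0]_(i | P i) f i) * c.
Proof. elim/big_rec2: _ => [|i y1 y2 _ ->]; lra. Qed.

Lemma sum_opp (I : finType) (f : I -> R) :
  \big[Rplus/0]_(i:I) (- f i) = - \big[Rplus/0]_i f i.
Proof. elim/big_rec2: _ => [|i y1 y2 _ ->]; lra. Qed.

Lemma sum0 (I : finType) (P : pred I) (f : I -> R) :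
  (forall i, P i -> f i = 0) -> \big[Rplus/0]_(i | P i) f i = 0.
Proof. move=> H; rewrite big1 //. Qed.

Lemma sum_single (I : finType) (i0 : I) (f : I -> R) :
  (forall i, i != i0 -> f i = 0) -> \big[Rplus/0]_(i:I) f i = f i0.
Proof.
move=> H; rewrite (bigD1 i0) //= big1 ?Rplus_0_r // => i /andP[_ Hi]; exact: H.
Qed.
Arguments sum_single [I] i0 [f].

Lemma sum_ext (I : finType) (P : pred I) (f g : I -> R) :
  (forall i, P i -> f i = g i) -> \big[Rplus/0]_(i | P i) f i = \big[Rplus/0]_(i | P i) g i.
Proof. exact: eq_bigr. Qed.

Lemma iter_plus (n : nat) (c : R) : iter n (Rplus c) 0 = INR n * c.
Proof. elim: n => [|n IH]; first by rewrite /=; lra. rewrite iterS IH S_INR; lra. Qed.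

Definition sg (b : bool) : R := if b then -1 else 1.
Lemma sgD a b : sg a * sg b = sg (a (+) b).
Proof. by case: a; case: b => /=; rewrite /sg; lra. Qed.
Lemma pow_m1 (n : nat) : (-1) ^ n = sg (odd n).
Proof. elim: n => [|n IH] /=; first by rewrite /sg. rewrite IH /sg; case: (odd n) => /=; lra. Qed.

Section Alg.
Variable m : nat.
Implicit Types (A B C D X Y : {set 'I_m}) (a b c j l : 'I_m).

Definition tog j X := symdiff [set j] X.

Lemma in_tog j X x : (x \in tog j X) = (x == j) (+) (x \in X).
Proof. rewrite /tog /symdiff !inE; by case: (x == j); case: (x \in X). Qed.

Lemma togK j X : tog j (tog j X) = X.
Proof. apply/setP => x; rewrite !in_tog; by case: (x == j); case: (x \in X). Qed.

Lemma togC a c X : tog a (tog c X) = tog c (tog a X).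
Proof. apply/setP => x; rewrite !in_tog; by case: (x == a); case: (x == c); case: (x \in X). Qed.

Lemma symdiffC A B : symdiff A B = symdiff B A.
Proof. by rewrite /symdiff setUC. Qed.

Lemma odd_card_tog j Y : odd #|tog j Y| = ~~ odd #|Y|.
Proof.
case Hj: (j \in Y).
- have -> : tog j Y = Y :\ j.
    apply/setP => x; rewrite in_tog !inE; case: eqP => [->|] //=; by rewrite Hj.
  by rewrite (cardsD1 j Y) Hj /= negbK.
- have -> : tog j Y = j |: Y.
    apply/setP => x; rewrite in_tog !inE; case: eqP => [->|] //=; by rewrite Hj.
  by rewrite cardsU1 Hj.
Qed.

Lemma odd_cnt_tog (P : pred 'I_m) j X :
  odd #|[set x in tog j X | P x]| = odd #|[set x in X | P x]| (+) P j.
Proof.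
case HP: (P j).
- have -> : [set x in tog j X | P x] = tog j [set x in X | P x].
    apply/setP => x; rewrite !inE; case: (x =P j) => [->|_]; rewrite ?HP;
    by case: (_ \in X); case: (P x).
  by rewrite odd_card_tog addbT.
- have -> : [set x in tog j X | P x] = [set x in X | P x].
    apply/setP => x; rewrite !inE; case: (x =P j) => [->|_]; rewrite ?HP;
    by case: (_ \in X); case: (P x).
  by rewrite addbF.
Qed.

Definition cle j X := #|[set x in X | (x <= j)%N]|.
Definition cge j X := #|[set x in X | (j <= x)%N]|.

Lemma card_setI1 j X : #|[set j] :&: X| = (j \in X).
Proof.
case Hj: (j \in X).
- have -> : [set j] :&: X = [set j]. apply/setP => x; rewrite !inE; case: eqP => [->|]//=.
  by rewrite cards1.
- have -> : [set j] :&: X = set0. apply/setP => x; rewrite !inE; case: eqP => [->|]//=.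
  by rewrite cards0.
Qed.

Lemma card_setI1r j X : #|X :&: [set j]| = (j \in X).
Proof. by rewrite setIC card_setI1. Qed.

Lemma sL_eq j X : blade_sign [set j] X = sg (odd (cle j X)).
Proof.
rewrite /blade_sign pow_m1 card_setI1.
have -> : [set p : 'I_m * 'I_m | (p.1 \in [set j]) && (p.2 \in X) && (p.2 < p.1)%N]
   = (fun b => (j, b)) @: [set x in X | (x < j)%N].
  apply/setP => [[p1 p2]]; rewrite !inE /=; apply/idP/imsetP.
  - case/andP => /andP[/eqP -> H2] H3; exists p2 => //; by rewrite inE H2.
  - case=> b; rewrite inE => /andP[Hb Hbj] [-> ->]; by rewrite eqxx Hb Hbj.
rewrite card_imset; last by move=> x y [].
rewrite ?/cle ?/cge.
case Hj: (j \in X).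
- have -> : [set x in X | (x <= j)%N] = j |: [set x in X | (x < j)%N].
    apply/setP => x; rewrite !inE; case: (x =P j) => [->|Hne]; first by rewrite Hj leqnn ltnn ?eqxx.
    rewrite leq_eqVlt (_ : (nat_of_ord x == nat_of_ord j) = false) //; apply/negbTE; apply/eqP => /val_inj; exact: Hne.
  rewrite cardsU1 !inE ltnn andbF /= addnC; by [].
- have -> : [set x in X | (x <= j)%N] = [set x in X | (x < j)%N].
    apply/setP => x; rewrite !inE; case: (x =P j) => [->|Hne]; first by rewrite Hj.
    rewrite leq_eqVlt (_ : (nat_of_ord x == nat_of_ord j) = false) //; apply/negbTE; apply/eqP => /val_inj; exact: Hne.
  by rewrite addn0.
Qed.

Lemma sR_eq X j : blade_sign X [set j] = sg (odd (cge j X)).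
Proof.
rewrite /blade_sign pow_m1 card_setI1r.
have -> : [set p : 'I_m * 'I_m | (p.1 \in X) && (p.2 \in [set j]) && (p.2 < p.1)%N]
   = (fun a => (a, j)) @: [set x in X | (j < x)%N].
  apply/setP => [[p1 p2]]; rewrite !inE /=; apply/idP/imsetP.
  - case/andP => /andP[H1 /eqP ->] H3; exists p1 => //; by rewrite inE H1.
  - case=> b; rewrite inE => /andP[Hb Hbj] [-> ->]; by rewrite eqxx Hb Hbj.
rewrite card_imset; last by move=> x y [].
rewrite ?/cle ?/cge.
case Hj: (j \in X).
- have -> : [set x in X | (j <= x)%N] = j |: [set x in X | (j < x)%N].
    apply/setP => x; rewrite !inE; case: (x =P j) => [->|Hne]; first by rewrite Hj leqnn ltnn ?eqxx.
    rewrite leq_eqVlt (_ : (nat_of_ord j == nat_of_ord x) = false) //; apply/negbTE; apply/eqP => /val_inj /esym; exact: Hne.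
  rewrite cardsU1 !inE ltnn andbF /= addnC; by [].
- have -> : [set x in X | (j <= x)%N] = [set x in X | (j < x)%N].
    apply/setP => x; rewrite !inE; case: (x =P j) => [->|Hne]; first by rewrite Hj.
    rewrite leq_eqVlt (_ : (nat_of_ord j == nat_of_ord x) = false) //; apply/negbTE; apply/eqP => /val_inj /esym; exact: Hne.
  by rewrite addn0.
Qed.

End Alg.

Ltac bcase := repeat match goal with
  | |- context [odd ?x] => case: (odd x)
  | |- context [(?a <= ?b)%N] => case: (a <= b)%N
  end.
Ltac sgfin := rewrite ?Rmult_assoc ?sgD; congr (_ * sg _); bcase; by [].

Section Alg2.
Variable m : nat.
Implicit Types (A B C D X Y : {set 'I_m}) (a b c j l : 'I_m) (u v : Cl m).

Definition Le j u : Cl m := fun C => u (tog j C) * blade_sign [set j] (tog j C).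
Definition Re j u : Cl m := fun C => u (tog j C) * blade_sign (tog j C) [set j].

Lemma tog_eq j B C : (symdiff [set j] B == C) = (B == tog j C).
Proof.
apply/eqP/eqP => [<-|->]; first by rewrite -/(tog j B) togK.
by rewrite -/(tog j (tog j C)) togK.
Qed.

Lemma mul_eL j u : cl_mul (cl_e j) u = Le j u.
Proof.
apply: functional_extensionality => C; rewrite /cl_mul (sum_single [set j]).
- rewrite /cl_e eqxx (eq_bigl (fun B => B == tog j C)); last by move=> B; rewrite tog_eq.
  rewrite big_pred1_eq /Le; lra.
- move=> A HA; apply: sum0 => B _; rewrite /cl_e (negbTE HA); lra.
Qed.

Lemma mul_eR j u : cl_mul u (cl_e j) = Re j u.
Proof.
apply: functional_extensionality => C; rewrite /cl_mul (sum_single (tog j C)).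
- rewrite big_mkcond (sum_single [set j]).
  + rewrite symdiffC -/(tog j (tog j C)) togK eqxx /cl_e eqxx /Re; lra.
  + move=> B HB; rewrite /cl_e (negbTE HB); case: ifP => _; lra.
- move=> A HA; rewrite big_mkcond; apply: sum0 => B _.
  case: ifP => // HB; rewrite /cl_e; case: eqP => [HBj|_]; last lra. subst B.
  move: HB; rewrite symdiffC tog_eq => /eqP HC.
  by move: HA; rewrite HC eqxx.
Qed.

Lemma cle_tog j c X : odd (cle j (tog c X)) = odd (cle j X) (+) (c <= j)%N.
Proof. by rewrite /cle (odd_cnt_tog (fun x : 'I_m => (x <= j)%N)). Qed.
Lemma cge_tog j c X : odd (cge j (tog c X)) = odd (cge j X) (+) (j <= c)%N.
Proof. by rewrite /cge (odd_cnt_tog (fun x : 'I_m => (j <= x)%N)). Qed.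

Lemma LeLe_D b c u D :
  Le b (Le c u) (tog b (tog c D)) = u D * sg (odd (cle c D) (+) odd (cle b D) (+) (c <= b)%N).
Proof.
rewrite /Le togK togK !sL_eq cle_tog; sgfin.
Qed.

Lemma ReRe_D b c u D :
  Re b (Re c u) (tog b (tog c D)) = u D * sg (odd (cge c D) (+) odd (cge b D) (+) (b <= c)%N).
Proof.
rewrite /Re togK togK !sR_eq cge_tog; sgfin.
Qed.

Lemma LeRe_D a c u D :
  Le a (Re c u) (tog a (tog c D)) = u D * sg (odd (cge c D) (+) odd (cle a D) (+) (c <= a)%N).
Proof.
rewrite /Le /Re togK togK sL_eq sR_eq cle_tog; sgfin.
Qed.

Lemma ReLe_D a c u D :
  Re c (Le a u) (tog c (tog a D)) = u D * sg (odd (cge c D) (+) odd (cle a D) (+) (c <= a)%N).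
Proof.
rewrite /Le /Re togK togK sL_eq sR_eq cge_tog; sgfin.
Qed.

Lemma LR_comm a c u : Le a (Re c u) = Re c (Le a u).
Proof.
apply: functional_extensionality => C.
pose D := tog c (tog a C).
have E1 : C = tog a (tog c D) by rewrite /D togK togK.
have E2 : C = tog c (tog a D) by rewrite /D togC togK togK.
transitivity (Le a (Re c u) (tog a (tog c D))); first by rewrite -E1.
transitivity (Re c (Le a u) (tog c (tog a D))); last by rewrite -E2.
by rewrite LeRe_D ReLe_D.
Qed.

Lemma sg_neg x : sg (~~ x) = - sg x.
Proof. case: x; rewrite /sg /=; lra. Qed.

Lemma LL_anti b c u C :
  Le b (Le c u) C + Le c (Le b u) C = if b == c then -2 * u C else 0.
Proof.
case: (b =P c) => [<-|Hbc].
- have -> : C = tog b (tog b C) by rewrite togK.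
  rewrite LeLe_D togK leqnn.
  rewrite (_ : odd (cle b C) (+) odd (cle b C) (+) true = true); last by case: (odd _).
  rewrite /sg /=; lra.
- have -> : C = tog b (tog c (tog c (tog b C))) by rewrite togK togK.
  set D := tog c (tog b C).
  rewrite LeLe_D togC LeLe_D.
  have Hn : (c <= b)%N = ~~ (b <= c)%N.
    rewrite leqNgt ltn_neqAle (_ : (nat_of_ord b != nat_of_ord c) = true) //.
    apply/eqP => /val_inj; exact: Hbc.
  rewrite Hn (_ : odd (cle c D) (+) odd (cle b D) (+) ~~ (b <= c)%N =
     ~~ (odd (cle b D) (+) odd (cle c D) (+) (b <= c)%N)); last first.
    by case: (odd (cle c D)); case: (odd (cle b D)); case: (b <= c)%N.
  rewrite sg_neg; lra.
Qed.

Lemma RR_anti b c u C :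
  Re b (Re c u) C + Re c (Re b u) C = if b == c then -2 * u C else 0.
Proof.
case: (b =P c) => [<-|Hbc].
- have -> : C = tog b (tog b C) by rewrite togK.
  rewrite ReRe_D togK leqnn.
  rewrite (_ : odd (cge b C) (+) odd (cge b C) (+) true = true); last by case: (odd _).
  rewrite /sg /=; lra.
- have -> : C = tog b (tog c (tog c (tog b C))) by rewrite togK togK.
  set D := tog c (tog b C).
  rewrite ReRe_D togC ReRe_D.
  have Hn : (c <= b)%N = ~~ (b <= c)%N.
    rewrite leqNgt ltn_neqAle (_ : (nat_of_ord b != nat_of_ord c) = true) //.
    apply/eqP => /val_inj; exact: Hbc.
  rewrite Hn (_ : odd (cge c D) (+) odd (cge b D) (+) (b <= c)%N =
     ~~ (odd (cge b D) (+) odd (cge c D) (+) ~~ (b <= c)%N)); last first.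
    by case: (odd (cge c D)); case: (odd (cge b D)); case: (b <= c)%N.
  rewrite sg_neg; lra.
Qed.

Lemma cge_cle a C : (cge a C + cle a C = #|C| + (a \in C))%N.
Proof.
rewrite /cge /cle -cardsUI.
have -> : [set x in C | (a <= x)%N] :|: [set x in C | (x <= a)%N] = C.
  apply/setP => x; rewrite !inE; case: (x \in C) => //=; exact: leq_total.
have -> : [set x in C | (a <= x)%N] :&: [set x in C | (x <= a)%N] = C :&: [set a].
  apply/setP => x; rewrite !inE.
  case: (x \in C) => //=; apply/idP/idP => [/andP[H1 H2]|/eqP ->]; last by rewrite leqnn.
  apply/eqP/val_inj/eqP; rewrite eqn_leq H1 H2 //.
by rewrite card_setI1r.
Qed.

Lemma LeRe_same a u C :
  Le a (Re a u) C = u C * sg (odd #|C| (+) (a \in C) (+) true).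
Proof.
have -> : C = tog a (tog a C) by rewrite togK.
rewrite LeRe_D togK leqnn -oddD cge_cle oddD oddb //.
Qed.

End Alg2.

Section Lin.
Variable m : nat.
Implicit Types (A B C D X Y : {set 'I_m}) (a b c j l : 'I_m) (u v : Cl m).

Definition cl_opp u : Cl m := fun C => - u C.
Definition cl_scale (r : R) u : Cl m := fun C => r * u C.
Definition tau u : Cl m := cl_sum (fun a : 'I_m => Le a (Re a u)).

Lemma sum_delta (I : finType) (b : I) (f : I -> R) :
  \big[Rplus/0]_(c : I) (if b == c then f c else 0) = f b.
Proof.
rewrite (sum_single b); first by rewrite eqxx.
by move=> c Hc; rewrite eq_sym (negbTE Hc).
Qed.

Lemma Le_sum (I : finType) j (f : I -> Cl m) : Le j (cl_sum f) = cl_sum (fun i => Le j (f i)).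
Proof. apply: functional_extensionality => C; by rewrite /Le /cl_sum sum_mull. Qed.
Lemma Re_sum (I : finType) j (f : I -> Cl m) : Re j (cl_sum f) = cl_sum (fun i => Re j (f i)).
Proof. apply: functional_extensionality => C; by rewrite /Re /cl_sum sum_mull. Qed.
Lemma Le_add j u v : Le j (cl_add u v) = cl_add (Le j u) (Le j v).
Proof. apply: functional_extensionality => C; rewrite /Le /cl_add; lra. Qed.
Lemma Re_add j u v : Re j (cl_add u v) = cl_add (Re j u) (Re j v).
Proof. apply: functional_extensionality => C; rewrite /Re /cl_add; lra. Qed.
Lemma Le_opp j u : Le j (cl_opp u) = cl_opp (Le j u).
Proof. apply: functional_extensionality => C; rewrite /Le /cl_opp; lra. Qed.
Lemma Re_opp j u : Re j (cl_opp u) = cl_opp (Re j u).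
Proof. apply: functional_extensionality => C; rewrite /Re /cl_opp; lra. Qed.
Lemma Le_scale j r u : Le j (cl_scale r u) = cl_scale r (Le j u).
Proof. apply: functional_extensionality => C; rewrite /Le /cl_scale; lra. Qed.
Lemma Re_scale j r u : Re j (cl_scale r u) = cl_scale r (Re j u).
Proof. apply: functional_extensionality => C; rewrite /Re /cl_scale; lra. Qed.
Lemma Le_zero j : Le j (@cl_zero m) = @cl_zero m.
Proof. apply: functional_extensionality => C; rewrite /Le /cl_zero; lra. Qed.
Lemma Re_zero j : Re j (@cl_zero m) = @cl_zero m.
Proof. apply: functional_extensionality => C; rewrite /Re /cl_zero; lra. Qed.

Lemma cl_sum_exch (I J : finType) (f : I -> J -> Cl m) :
  cl_sum (fun i => cl_sum (fun y => f i y)) = cl_sum (fun y => cl_sum (fun i => f i y)).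
Proof. apply: functional_extensionality => C; rewrite /cl_sum; exact: exchange_big. Qed.
Lemma cl_sum_pair (I J : finType) (f : I -> J -> Cl m) :
  cl_sum (fun p : I * J => f p.1 p.2) = cl_sum (fun i => cl_sum (fun y => f i y)).
Proof. apply: functional_extensionality => C; rewrite /cl_sum; by rewrite pair_bigA. Qed.
Lemma cl_sum_add (I : finType) (f g : I -> Cl m) :
  cl_sum (fun i => cl_add (f i) (g i)) = cl_add (cl_sum f) (cl_sum g).
Proof. apply: functional_extensionality => C; by rewrite /cl_sum /cl_add sumD. Qed.
Lemma cl_sum_opp (I : finType) (f : I -> Cl m) :
  cl_sum (fun i => cl_opp (f i)) = cl_opp (cl_sum f).
Proof. apply: functional_extensionality => C; by rewrite /cl_sum /cl_opp sum_opp. Qed.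
Lemma cl_sum_scale (I : finType) r (f : I -> Cl m) :
  cl_sum (fun i => cl_scale r (f i)) = cl_scale r (cl_sum f).
Proof. apply: functional_extensionality => C; by rewrite /cl_sum /cl_scale sum_mulr. Qed.
Lemma cl_sum_zero (I : finType) : cl_sum (fun i : I => @cl_zero m) = @cl_zero m.
Proof. apply: functional_extensionality => C; rewrite /cl_sum /cl_zero; exact: sum0. Qed.
Lemma cl_sum_ext (I : finType) (f g : I -> Cl m) : (forall i, f i = g i) -> cl_sum f = cl_sum g.
Proof. move=> H; congr cl_sum; exact: functional_extensionality. Qed.

Lemma Lsum_anti (X : 'I_m -> 'I_m -> Cl m) : (forall b c, X b c = X c b) ->
  cl_sum (fun b => Le b (cl_sum (fun c => Le c (X b c)))) = cl_opp (cl_sum (fun b => X b b)).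
Proof.
move=> HX; apply: functional_extensionality => C.
rewrite /cl_sum /cl_opp.
have E : forall b, Le b (cl_sum (fun c => Le c (X b c))) C =
   \big[Rplus/0]_(c : 'I_m) Le b (Le c (X b c)) C.
  by move=> b; rewrite Le_sum.
rewrite (eq_bigr _ (fun b _ => E b)).
set S := \big[Rplus/0]_(b : 'I_m) _.
have E2 : S = \big[Rplus/0]_(b : 'I_m) \big[Rplus/0]_(c : 'I_m) Le c (Le b (X b c)) C.
  rewrite /S exchange_big; apply: eq_bigr => b _; apply: eq_bigr => c _; by rewrite HX.
have E3 : S + S = \big[Rplus/0]_(b : 'I_m) (-2 * X b b C).
  rewrite {1}E2 /S -sumD; apply: eq_bigr => b _; rewrite -sumD.
  rewrite (eq_bigr (fun c => if b == c then -2 * X b c C else 0)).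
  + rewrite (sum_delta b (fun c => -2 * X b c C)) //.
  + by move=> c _; rewrite Rplus_comm LL_anti.
rewrite sum_mulr in E3.
lra.
Qed.

Lemma Rsum_anti (X : 'I_m -> 'I_m -> Cl m) : (forall b c, X b c = X c b) ->
  cl_sum (fun b => Re b (cl_sum (fun c => Re c (X b c)))) = cl_opp (cl_sum (fun b => X b b)).
Proof.
move=> HX; apply: functional_extensionality => C.
rewrite /cl_sum /cl_opp.
have E : forall b, Re b (cl_sum (fun c => Re c (X b c))) C =
   \big[Rplus/0]_(c : 'I_m) Re b (Re c (X b c)) C.
  by move=> b; rewrite Re_sum.
rewrite (eq_bigr _ (fun b _ => E b)).
set S := \big[Rplus/0]_(b : 'I_m) _.
have E2 : S = \big[Rplus/0]_(b : 'I_m) \big[Rplus/0]_(c : 'I_m) Re c (Re b (X b c)) C.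
  rewrite /S exchange_big; apply: eq_bigr => b _; apply: eq_bigr => c _; by rewrite HX.
have E3 : S + S = \big[Rplus/0]_(b : 'I_m) (-2 * X b b C).
  rewrite {1}E2 /S -sumD; apply: eq_bigr => b _; rewrite -sumD.
  rewrite (eq_bigr (fun c => if b == c then -2 * X b c C else 0)).
  + rewrite (sum_delta b (fun c => -2 * X b c C)) //.
  + by move=> c _; rewrite Rplus_comm RR_anti.
rewrite sum_mulr in E3.
lra.
Qed.

Lemma tau_Le b u : tau (Le b u) = cl_add (cl_opp (Le b (tau u))) (cl_scale (-2) (Re b u)).
Proof.
apply: functional_extensionality => C.
rewrite /tau /cl_add /cl_opp /cl_scale Le_sum /cl_sum.
rewrite -sum_opp.
rewrite -(sum_delta b (fun c => -2 * Re c u C)) -sumD.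
apply: eq_bigr => c _.
rewrite -LR_comm.
have := LL_anti c b (Re c u) C. rewrite eq_sym.
case: (b == c) => /=; lra.
Qed.

Lemma tauE u : tau u = cl_sum (fun a => Re a (Le a u)).
Proof. rewrite /tau; apply: cl_sum_ext => a; by rewrite LR_comm. Qed.

Lemma tau_Re b u : tau (Re b u) = cl_add (cl_opp (Re b (tau u))) (cl_scale (-2) (Le b u)).
Proof.
apply: functional_extensionality => C.
rewrite !tauE /cl_add /cl_opp /cl_scale Re_sum /cl_sum.
rewrite -sum_opp.
rewrite -(sum_delta b (fun c => -2 * Le c u C)) -sumD.
apply: eq_bigr => c _.
rewrite LR_comm.
have := RR_anti c b (Le c u) C. rewrite eq_sym.
case: (b == c) => /=; lra.
Qed.

Lemma sum_sg_in C : \big[Rplus/0]_(a : 'I_m) sg (a \in C) = INR m - 2 * INR #|C|.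
Proof.
rewrite (bigID (fun a => a \in C)) /=.
rewrite (eq_bigr (fun _ => -1)); last by move=> a ->.
rewrite [X in _ + X = _](eq_bigr (fun _ => 1)); last by move=> a /negbTE ->.
rewrite !big_const !iter_plus.
have Hc := cardsC C. rewrite card_ord in Hc.
have HI : INR m = INR #|C| + INR #|~: C| by rewrite -plus_INR plusE Hc.
rewrite (_ : #|(fun a : 'I_m => a \notin C)| = #|~: C|); last by apply: eq_card => x; rewrite !inE.
rewrite [X in INR X * -1](_ : _ = #|C|); last by apply: eq_card => x.
have H : forall a b c : R, c = a + b -> a * -1 + b * 1 = c - 2 * a by move=> *; lra.
exact: H.
Qed.

Lemma tau_kvec k u : (k + k)%N = m -> is_kvector k u -> tau u = @cl_zero m.
Proof.
move=> Hk Hu; apply: functional_extensionality => C.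
rewrite /tau /cl_sum /cl_zero.
rewrite (eq_bigr (fun a => u C * (sg (~~ odd #|C|) * sg (a \in C)))); last first.
  move=> a _; rewrite LeRe_same sgD; congr (_ * sg _); by case: (odd _); case: (_ \in _).
rewrite sum_mulr sum_mulr sum_sg_in.
case: (#|C| =P k) => [HC|HC]; last by rewrite (Hu C HC); lra.
rewrite HC -Hk plus_INR; lra.
Qed.

End Lin.

Section Calc.
Variable m : nat.
Implicit Types (A B C D X Y : {set 'I_m}) (a b c j l : 'I_m) (u v : Cl m) (x y z : pt m).

Definition DL j (G : pt m -> R) x (d : R) := derivable_pt_lim (fun t => G (shift x j t)) 0 d.
Definition CDL j (G : pt m -> Cl m) x (L : Cl m) := forall C, DL j (fun z => G z C) x (L C).

Lemma shift0 x j : shift x j 0 = x.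
Proof. apply: functional_extensionality => i; rewrite /shift; case: (i == j) => //; lra. Qed.

Lemma pd_eq j G x d : DL j G x d -> pd j G x = d.
Proof.
move=> H; rewrite /pd.
have := epsilon_spec (inhabits 0) (fun r : R => derivable_pt_lim (fun t => G (shift x j t)) 0 r)
  (ex_intro _ d H).
move=> H2; exact: (uniqueness_limite _ _ _ _ H2 H).
Qed.

Lemma DL_pd Om j G x : pdiff_on Om j G -> Om x -> DL j G x (pd j G x).
Proof.
move=> H Hx; have [d Hd] := H x Hx; by rewrite (pd_eq Hd).
Qed.

Lemma DL_fext j G H x d : (forall z, G z = H z) -> DL j G x d -> DL j H x d.
Proof. move=> E; have -> : H = G by apply: functional_extensionality => z; rewrite E. done. Qed.

Lemma DL_plus j G H x d1 d2 : DL j G x d1 -> DL j H x d2 -> DL j (fun z => G z + H z) x (d1 + d2).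
Proof. move=> H1 H2; exact: (derivable_pt_lim_plus _ _ _ _ _ H1 H2). Qed.

Lemma DL_scal j G x d (r : R) : DL j G x d -> DL j (fun z => r * G z) x (r * d).
Proof. move=> H1; exact: (derivable_pt_lim_scal _ r _ _ H1). Qed.

Lemma DL_scalr j G x d (r : R) : DL j G x d -> DL j (fun z => G z * r) x (d * r).
Proof.
move=> H1; have := DL_scal r H1; rewrite Rmult_comm.
apply: DL_fext => z; lra.
Qed.

Lemma DL_const j x (r : R) : DL j (fun _ => r) x 0.
Proof. exact: derivable_pt_lim_const. Qed.

Lemma DL_mul j G H x d1 d2 : DL j G x d1 -> DL j H x d2 ->
  DL j (fun z => G z * H z) x (d1 * H x + G x * d2).
Proof.
move=> H1 H2; have := derivable_pt_lim_mult _ _ _ _ _ H1 H2.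
by rewrite /DL /mult_fct shift0.
Qed.

Lemma DL_coord j l x : DL j (fun z => z l) x (if l == j then 1 else 0).
Proof.
rewrite /DL /shift; case: (l == j).
- have := derivable_pt_lim_plus _ _ 0 0 1 (derivable_pt_lim_const (x l) 0) (derivable_pt_lim_id 0).
  rewrite Rplus_0_l; by [].
- exact: derivable_pt_lim_const.
Qed.

Lemma DL_sum (I : finType) j (g : I -> pt m -> R) x (d : I -> R) :
  (forall i, DL j (g i) x (d i)) ->
  DL j (fun z => \big[Rplus/0]_(i : I) g i z) x (\big[Rplus/0]_(i : I) d i).
Proof.
move=> H.
suff : forall r : seq I, DL j (fun z => \big[Rplus/0]_(i <- r) g i z) x (\big[Rplus/0]_(i <- r) d i).
  by apply.
elim => [|i r IH].
- rewrite big_nil; apply: (DL_fext (G := fun _ => 0)); first by move=> z; rewrite big_nil.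
  exact: DL_const.
- rewrite big_cons; apply: (DL_fext (G := fun z => g i z + \big[Rplus/0]_(k <- r) g k z)).
    by move=> z; rewrite big_cons.
  exact: DL_plus.
Qed.

Lemma DL_ext Om j G H x d : is_open Om -> Om x -> (forall z, Om z -> G z = H z) ->
  DL j G x d -> DL j H x d.
Proof.
move=> Ho Hx E HG; have [e [He Hb]] := Ho x Hx.
apply: (derivable_pt_lim_locally_ext _ _ 0 (- e) e d _ _ HG); first lra.
move=> t Ht; apply: E; apply: Hb => i; rewrite /shift; case: (i == j).
- rewrite (_ : x i + t - x i = t); last lra. apply: Rabs_def1; lra.
- rewrite Rminus_diag Rabs_R0; lra.
Qed.

Lemma pdCl_eq j G x L : CDL j G x L -> pdCl j G x = L.
Proof. move=> H; apply: functional_extensionality => C; exact: pd_eq. Qed.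

Lemma CDL_pd Om j G x : (forall C, pdiff_on Om j (fun z => G z C)) -> Om x -> CDL j G x (pdCl j G x).
Proof. move=> H Hx C; exact: (DL_pd (H C) Hx). Qed.

Lemma CDL_ext Om j G H x L : is_open Om -> Om x -> (forall z, Om z -> G z = H z) ->
  CDL j G x L -> CDL j H x L.
Proof. move=> Ho Hx E HG C; apply: (DL_ext Ho Hx _ (HG C)) => z Hz; by rewrite E. Qed.

Lemma CDL_Le j b G x L : CDL j G x L -> CDL j (fun z => Le b (G z)) x (Le b L).
Proof. move=> H C; rewrite /Le; exact: DL_scalr. Qed.
Lemma CDL_Re j b G x L : CDL j G x L -> CDL j (fun z => Re b (G z)) x (Re b L).
Proof. move=> H C; rewrite /Re; exact: DL_scalr. Qed.
Lemma CDL_sum (I : finType) j (f : I -> pt m -> Cl m) x (L : I -> Cl m) :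
  (forall i, CDL j (f i) x (L i)) -> CDL j (fun z => cl_sum (fun i => f i z)) x (cl_sum L).
Proof. move=> H C; rewrite /cl_sum; apply: DL_sum => i; exact: H. Qed.
Lemma CDL_add j G H x L1 L2 : CDL j G x L1 -> CDL j H x L2 ->
  CDL j (fun z => cl_add (G z) (H z)) x (cl_add L1 L2).
Proof. move=> H1 H2 C; exact: DL_plus. Qed.
Lemma CDL_opp j G x L : CDL j G x L -> CDL j (fun z => cl_opp (G z)) x (cl_opp L).
Proof.
move=> H C; rewrite /cl_opp.
apply: (DL_fext (G := fun z => -1 * G z C)); first by move=> z; lra.
rewrite (_ : - L C = -1 * L C); last lra. exact: DL_scal.
Qed.
Lemma CDL_const j x (u : Cl m) : CDL j (fun _ => u) x (@cl_zero m).
Proof. move=> C; exact: DL_const. Qed.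
Lemma CDL_tau j G x L : CDL j G x L -> CDL j (fun z => tau (G z)) x (tau L).
Proof. move=> H; rewrite /tau; apply: CDL_sum => a; apply: CDL_Le; exact: CDL_Re. Qed.
Lemma CDL_xscale j l G x L : CDL j G x L ->
  CDL j (fun z => cl_scale (z l) (G z)) x
    (cl_add (cl_scale (x l) L) (if l == j then G x else @cl_zero m)).
Proof.
move=> H C; rewrite /cl_scale /cl_add.
have := DL_mul (DL_coord j l x) (H C).
rewrite (_ : (if l == j then 1 else 0) * G x C + x l * L C =
   x l * L C + (if l == j then G x else @cl_zero m) C); first by [].
rewrite /cl_zero; case: (l == j); lra.
Qed.

End Calc.

Section Schwarz.
Variable m : nat.
Implicit Types (a b i j k : 'I_m) (x y z : pt m).

Lemma shiftC x i j s t : i != j -> shift (shift x i s) j t = shift (shift x j t) i s.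
Proof.
move=> Hij; apply: functional_extensionality => k; rewrite /shift.
case: (k == i); case: (k == j) => //; lra.
Qed.

Lemma shiftS x j s t : shift (shift x j s) j t = shift x j (s + t).
Proof.
apply: functional_extensionality => k; rewrite /shift; case: (k == j) => //; lra.
Qed.

Lemma line_deriv (g : pt m -> R) (q : R -> pt m) (c0 : R) i z (d : R) :
  (forall u, q (c0 + u) = shift z i u) -> DL i g z d ->
  derivable_pt_lim (fun s => g (q s)) c0 d.
Proof.
move=> Hq H eps Heps; have [del Hdel] := H eps Heps.
exists del => h Hh0 Hh; have := Hdel h Hh0 Hh.
have E : q c0 = shift z i 0 by rewrite -(Hq 0) Rplus_0_r.
by rewrite Hq E Rplus_0_l.
Qed.

Lemma p_close x i j s t h : i != j -> 0 <= s <= h -> 0 <= t <= h ->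
  forall k, Rabs (shift (shift x i s) j t k - x k) <= h.
Proof.
move=> Hij Hs Ht k; rewrite /shift.
case: (k =P j) => [Hk|_].
- subst k; rewrite (negbTE (ltac:(by rewrite eq_sym) : j != i)).
  rewrite (_ : x j + t - x j = t); last lra. rewrite Rabs_right; lra.
- case: (k == i).
  + rewrite (_ : x k + s - x k = s); last lra. rewrite Rabs_right; lra.
  + rewrite Rminus_diag Rabs_R0; lra.
Qed.

Definition Dlt (g : pt m -> R) x i j h :=
  g (shift (shift x i h) j h) - g (shift (shift x i h) j 0)
  - g (shift (shift x i 0) j h) + g x.

Lemma mvt2 (Om : pt m -> Prop) (g : pt m -> R) x i j h :
  i != j -> 0 < h ->
  (forall s t, 0 <= s <= h -> 0 <= t <= h -> Om (shift (shift x i s) j t)) ->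
  pdiff_on Om i g -> pdiff_on Om j (pd i g) ->
  exists s t, 0 < s < h /\ 0 < t < h /\
    Dlt g x i j h = h * h * pd j (pd i g) (shift (shift x i s) j t).
Proof.
move=> Hij Hh HOm Hg1 Hg2.
pose phi s := g (shift (shift x i s) j h) - g (shift (shift x i s) j 0).
pose phi' s := pd i g (shift (shift x i s) j h) - pd i g (shift (shift x i s) j 0).
have Hphi : forall c, 0 <= c <= h -> derivable_pt_lim phi c (phi' c).
  move=> c Hc; apply: derivable_pt_lim_minus.
  - apply: (line_deriv (i := i) (z := shift (shift x i c) j h)).
      by move=> u; rewrite -(shiftC _ _ _ Hij) shiftS.
    apply: (DL_pd Hg1); apply: HOm; lra.
  - apply: (line_deriv (i := i) (z := shift (shift x i c) j 0)).
      by move=> u; rewrite -(shiftC _ _ _ Hij) shiftS.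
    apply: (DL_pd Hg1); apply: HOm; lra.
have [s [Hs1 Hs2]] := MVT_cor2 phi phi' 0 h Hh Hphi.
pose psi t := pd i g (shift (shift x i s) j t).
have Hpsi : forall c, 0 <= c <= h -> derivable_pt_lim psi c (pd j (pd i g) (shift (shift x i s) j c)).
  move=> c Hc; apply: (line_deriv (i := j) (z := shift (shift x i s) j c)).
    by move=> u; rewrite shiftS.
  apply: (DL_pd Hg2); apply: HOm; lra.
have [t [Ht1 Ht2]] := MVT_cor2 psi _ 0 h Hh Hpsi.
exists s, t; split; first lra. split; first lra.
have E : Dlt g x i j h = phi h - phi 0.
  rewrite /Dlt /phi. rewrite (_ : shift (shift x i 0) j 0 = x); first lra.
  by rewrite !shift0.
rewrite E Hs1 /phi' -/(psi h) -/(psi 0) Ht1; ring.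
Qed.

Lemma Dlt_sym (g : pt m -> R) x i j h : i != j -> Dlt g x i j h = Dlt g x j i h.
Proof.
move=> Hij; rewrite /Dlt !(shiftC _ _ _ Hij) !shift0; lra.
Qed.

Lemma schwarz (Om : pt m -> Prop) (g : pt m -> R) : is_open Om -> Ck 2 Om g ->
  forall a b y, Om y -> pd a (pd b g) y = pd b (pd a g) y.
Proof.
move=> Ho [_ Hg] a b y Hy.
case: (a =P b) => [->//|Hab].
have [Hpa [_ Hpaa]] := Hg a. have [Hpb [_ Hpbb]] := Hg b.
have [Hpab Hcab] := Hpbb a.
have [Hpba Hcba] := Hpaa b.
have Hab' : b != a by apply/eqP => E; apply: Hab.
have Hab'' : a != b by apply/eqP.
apply: Rminus_diag_uniq; apply: NNPP => Hne.
set e := Rabs (pd a (pd b g) y - pd b (pd a g) y) / 2.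
have He : 0 < e by rewrite /e; have := Rabs_pos_lt _ Hne; lra.
have [d0 [Hd0 Hb0]] := Ho y Hy.
have [d1 [Hd1 Hc1]] := Hcab y Hy e He.
have [d2 [Hd2 Hc2]] := Hcba y Hy e He.
set h := Rmin d0 (Rmin d1 d2) / 2.
have Hh : 0 < h.
  have : 0 < Rmin d0 (Rmin d1 d2) by apply: Rmin_glb_lt => //; apply: Rmin_glb_lt.
  rewrite /h; lra.
have Hh0 : h < d0 by rewrite /h; have := Rmin_l d0 (Rmin d1 d2); lra.
have Hh1 : h < d1 by rewrite /h; have := Rmin_r d0 (Rmin d1 d2); have := Rmin_l d1 d2; lra.
have Hh2 : h < d2 by rewrite /h; have := Rmin_r d0 (Rmin d1 d2); have := Rmin_r d1 d2; lra.
have HOm : forall i j, i != j -> forall s t, 0 <= s <= h -> 0 <= t <= h -> Om (shift (shift y i s) j t).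
  move=> i j Hij s t Hs Ht; apply: Hb0 => k; have := p_close y Hij Hs Ht k; lra.
have [s1 [t1 [Hs1 [Ht1 E1]]]] := mvt2 Hab' Hh (HOm _ _ Hab') Hpb Hpab.
have [s2 [t2 [Hs2 [Ht2 E2]]]] := mvt2 Hab'' Hh (HOm _ _ Hab'') Hpa Hpba.
rewrite Dlt_sym // E2 in E1.
have Hhh : 0 < h * h by apply: Rmult_lt_0_compat.
have Eq : pd b (pd a g) (shift (shift y a s2) b t2) = pd a (pd b g) (shift (shift y b s1) a t1).
  apply: (Rmult_eq_reg_l (h * h)); lra.
have C1 := Hc1 (shift (shift y b s1) a t1) (HOm _ _ Hab' s1 t1 ltac:(lra) ltac:(lra))
   (fun k => Rle_lt_trans _ _ _ (@p_close y b a s1 t1 h Hab' ltac:(lra) ltac:(lra) k) Hh1).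
have C2 := Hc2 (shift (shift y a s2) b t2) (HOm _ _ Hab'' s2 t2 ltac:(lra) ltac:(lra))
   (fun k => Rle_lt_trans _ _ _ (@p_close y a b s2 t2 h Hab'' ltac:(lra) ltac:(lra) k) Hh2).
rewrite Eq in C2.
have T := Rabs_triang (pd a (pd b g) y - pd a (pd b g) (shift (shift y b s1) a t1))
   (pd a (pd b g) (shift (shift y b s1) a t1) - pd b (pd a g) y).
rewrite (_ : pd a (pd b g) y - pd a (pd b g) (shift (shift y b s1) a t1) +
   (pd a (pd b g) (shift (shift y b s1) a t1) - pd b (pd a g) y) =
   pd a (pd b g) y - pd b (pd a g) y) in T; last ring.
rewrite Rabs_minus_sym in C1.
rewrite /e in C1 C2; lra.
Qed.

End Schwarz.

Section Dirac.
Variable m : nat.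
Variable Om : pt m -> Prop.
Hypothesis hOm : is_open Om.
Implicit Types (a b c i j l : 'I_m) (x y z : pt m) (G H : pt m -> Cl m).

Definition Good G := forall j y, Om y -> CDL j G y (pdCl j G y).

Lemma Good_of G : (forall j y, Om y -> exists L, CDL j G y L) -> Good G.
Proof. move=> H j y Hy; have [L HL] := H j y Hy; by rewrite (pdCl_eq HL). Qed.

Lemma Good_ext G H : Good H -> (forall z, Om z -> G z = H z) -> Good G.
Proof.
move=> HH E; apply: Good_of => j y Hy; exists (pdCl j H y).
apply: (CDL_ext hOm Hy _ (HH j y Hy)) => z Hz; by rewrite E.
Qed.

Lemma Good_add G H : Good G -> Good H -> Good (fun z => cl_add (G z) (H z)).
Proof. move=> HG HH; apply: Good_of => j y Hy; eexists; exact: CDL_add (HG j y Hy) (HH j y Hy). Qed.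

Lemma Good_tau G : Good G -> Good (fun z => tau (G z)).
Proof. move=> HG; apply: Good_of => j y Hy; eexists; exact: CDL_tau (HG j y Hy). Qed.

Definition mulx G z : Cl m := cl_sum (fun l => cl_scale (z l) (Re l (G z))).
Definition xmul G z : Cl m := cl_sum (fun l => cl_scale (z l) (Le l (G z))).

Lemma cl_sum_delta (b : 'I_m) (u : 'I_m -> Cl m) :
  cl_sum (fun l => if l == b then u l else @cl_zero m) = u b.
Proof.
apply: functional_extensionality => C; rewrite /cl_sum.
rewrite (sum_single b); first by rewrite eqxx.
by move=> i Hi; rewrite (negbTE Hi).
Qed.

Lemma CDL_mulx G j y : CDL j G y (pdCl j G y) ->
  CDL j (mulx G) y (cl_add (cl_sum (fun l => cl_scale (y l) (Re l (pdCl j G y)))) (Re j (G y))).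
Proof.
move=> HG.
have H1 := CDL_sum (fun l => CDL_xscale l (CDL_Re l HG)).
rewrite cl_sum_add cl_sum_delta in H1; exact: H1.
Qed.

Lemma CDL_xmul G j y : CDL j G y (pdCl j G y) ->
  CDL j (xmul G) y (cl_add (cl_sum (fun l => cl_scale (y l) (Le l (pdCl j G y)))) (Le j (G y))).
Proof.
move=> HG.
have H1 := CDL_sum (fun l => CDL_xscale l (CDL_Le l HG)).
rewrite cl_sum_add cl_sum_delta in H1; exact: H1.
Qed.

Lemma Good_mulx G : Good G -> Good (mulx G).
Proof. move=> HG; apply: Good_of => j y Hy; eexists; exact: CDL_mulx (HG j y Hy). Qed.
Lemma Good_xmul G : Good G -> Good (xmul G).
Proof. move=> HG; apply: Good_of => j y Hy; eexists; exact: CDL_xmul (HG j y Hy). Qed.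

Lemma dirac_lE G y : dirac_l G y = cl_sum (fun j => Le j (pdCl j G y)).
Proof. rewrite /dirac_l; apply: cl_sum_ext => j; exact: mul_eL. Qed.
Lemma dirac_rE G y : dirac_r G y = cl_sum (fun j => Re j (pdCl j G y)).
Proof. rewrite /dirac_r; apply: cl_sum_ext => j; exact: mul_eR. Qed.

Lemma dl_ext G H y : Good H -> (forall z, Om z -> G z = H z) -> Om y -> dirac_l G y = dirac_l H y.
Proof.
move=> HH E Hy; rewrite !dirac_lE; apply: cl_sum_ext => j; congr Le.
apply: pdCl_eq; apply: (CDL_ext hOm Hy _ (HH j y Hy)) => z Hz; by rewrite E.
Qed.
Lemma dr_ext G H y : Good H -> (forall z, Om z -> G z = H z) -> Om y -> dirac_r G y = dirac_r H y.
Proof.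
move=> HH E Hy; rewrite !dirac_rE; apply: cl_sum_ext => j; congr Re.
apply: pdCl_eq; apply: (CDL_ext hOm Hy _ (HH j y Hy)) => z Hz; by rewrite E.
Qed.

Lemma dl_add G H y : Good G -> Good H -> Om y ->
  dirac_l (fun z => cl_add (G z) (H z)) y = cl_add (dirac_l G y) (dirac_l H y).
Proof.
move=> HG HH Hy; rewrite !dirac_lE -cl_sum_add; apply: cl_sum_ext => j.
by rewrite (pdCl_eq (CDL_add (HG j y Hy) (HH j y Hy))) Le_add.
Qed.
Lemma dr_add G H y : Good G -> Good H -> Om y ->
  dirac_r (fun z => cl_add (G z) (H z)) y = cl_add (dirac_r G y) (dirac_r H y).
Proof.
move=> HG HH Hy; rewrite !dirac_rE -cl_sum_add; apply: cl_sum_ext => j.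
by rewrite (pdCl_eq (CDL_add (HG j y Hy) (HH j y Hy))) Re_add.
Qed.

Lemma dl_tau G y : Good G -> Om y ->
  dirac_l (fun z => tau (G z)) y = cl_sum (fun a => Le a (tau (pdCl a G y))).
Proof.
move=> HG Hy; rewrite dirac_lE; apply: cl_sum_ext => a.
by rewrite (pdCl_eq (CDL_tau (HG a y Hy))).
Qed.
Lemma dr_tau G y : Good G -> Om y ->
  dirac_r (fun z => tau (G z)) y = cl_sum (fun a => Re a (tau (pdCl a G y))).
Proof.
move=> HG Hy; rewrite dirac_rE; apply: cl_sum_ext => a.
by rewrite (pdCl_eq (CDL_tau (HG a y Hy))).
Qed.

Lemma dl_mulx G y : Good G -> Om y ->
  dirac_l (mulx G) y = cl_add (mulx (dirac_l G) y) (tau (G y)).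
Proof.
move=> HG Hy; rewrite dirac_lE.
rewrite (cl_sum_ext (g := fun j => cl_add (Le j (cl_sum (fun l => cl_scale (y l) (Re l (pdCl j G y)))))
    (Le j (Re j (G y))))); last first.
  by move=> j; rewrite (pdCl_eq (CDL_mulx (HG j y Hy))) Le_add.
rewrite cl_sum_add; congr cl_add.
rewrite /mulx dirac_lE.
rewrite (cl_sum_ext (g := fun j => cl_sum (fun l => cl_scale (y l) (Re l (Le j (pdCl j G y)))))); last first.
  move=> j; rewrite Le_sum; apply: cl_sum_ext => l; by rewrite Le_scale LR_comm.
rewrite cl_sum_exch; apply: cl_sum_ext => l.
by rewrite Re_sum cl_sum_scale.
Qed.

Lemma dr_xmul G y : Good G -> Om y ->
  dirac_r (xmul G) y = cl_add (xmul (dirac_r G) y) (tau (G y)).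
Proof.
move=> HG Hy; rewrite dirac_rE tauE.
rewrite (cl_sum_ext (g := fun j => cl_add (Re j (cl_sum (fun l => cl_scale (y l) (Le l (pdCl j G y)))))
    (Re j (Le j (G y))))); last first.
  by move=> j; rewrite (pdCl_eq (CDL_xmul (HG j y Hy))) Re_add.
rewrite cl_sum_add; congr cl_add.
rewrite /xmul dirac_rE.
rewrite (cl_sum_ext (g := fun j => cl_sum (fun l => cl_scale (y l) (Le l (Re j (pdCl j G y)))))); last first.
  move=> j; rewrite Re_sum; apply: cl_sum_ext => l; by rewrite Re_scale LR_comm.
rewrite cl_sum_exch; apply: cl_sum_ext => l.
by rewrite Le_sum cl_sum_scale.
Qed.

Lemma mul_vec u x : cl_mul u (cl_vec x) = cl_sum (fun l => cl_scale (x l) (Re l u)).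
Proof.
apply: functional_extensionality => C.
rewrite /cl_sum /cl_scale.
rewrite [RHS](eq_bigr (fun l => x l * cl_mul u (cl_e l) C)); last by move=> l _; rewrite mul_eR.
rewrite /cl_mul /cl_vec /cl_sum.
rewrite (eq_bigr (fun A => \big[Rplus/0]_(B | symdiff A B == C)
    \big[Rplus/0]_(l : 'I_m) (x l * (u A * cl_e l B * blade_sign A B)))); last first.
  move=> A _; apply: eq_bigr => B _.
  rewrite -sum_mulr -sum_mull; apply: eq_bigr => l _; ring.
rewrite (eq_bigr (fun A => \big[Rplus/0]_(l : 'I_m) \big[Rplus/0]_(B | symdiff A B == C)
    (x l * (u A * cl_e l B * blade_sign A B)))); last by move=> A _; rewrite exchange_big.
rewrite exchange_big; apply: eq_bigr => l _.
rewrite -sum_mulr; apply: eq_bigr => A _; by rewrite -sum_mulr.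
Qed.

Lemma vec_mul u x : cl_mul (cl_vec x) u = cl_sum (fun l => cl_scale (x l) (Le l u)).
Proof.
apply: functional_extensionality => C.
rewrite /cl_sum /cl_scale.
rewrite [RHS](eq_bigr (fun l => x l * cl_mul (cl_e l) u C)); last by move=> l _; rewrite mul_eL.
rewrite /cl_mul /cl_vec /cl_sum.
rewrite (eq_bigr (fun A => \big[Rplus/0]_(B | symdiff A B == C)
    \big[Rplus/0]_(l : 'I_m) (x l * (cl_e l A * u B * blade_sign A B)))); last first.
  move=> A _; apply: eq_bigr => B _.
  rewrite -sum_mull -sum_mull; apply: eq_bigr => l _; ring.
rewrite (eq_bigr (fun A => \big[Rplus/0]_(l : 'I_m) \big[Rplus/0]_(B | symdiff A B == C)
    (x l * (cl_e l A * u B * blade_sign A B)))); last by move=> A _; rewrite exchange_big.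
rewrite exchange_big; apply: eq_bigr => l _.
rewrite -sum_mulr; apply: eq_bigr => A _; by rewrite -sum_mulr.
Qed.

End Dirac.

Lemma Ck_mono m (Om : pt m -> Prop) k g : Ck k.+1 Om g -> Ck k Om g.
Proof.
elim: k g => [|k IH] g /=; first by case.
case=> Hc H; split => // j; have [Hp Hk] := H j; split => //; exact: IH.
Qed.

Lemma pd_zero m (Om : pt m -> Prop) j (G : pt m -> R) y : is_open Om ->
  (forall z, Om z -> G z = 0) -> Om y -> pd j G y = 0.
Proof.
move=> Ho H Hy; apply: pd_eq; apply: (DL_ext Ho Hy _ (DL_const j y 0)) => z Hz; by rewrite H.
Qed.

Section Main.
Variables (m : nat) (Om : pt m -> Prop) (F : pt m -> Cl m).
Hypotheses (hOm : is_open Om) (hF : CkCl 3 Om F)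
  (hk : forall x, Om x -> is_kvector m./2 (F x)) (hkk : (m./2 + m./2)%N = m).
Implicit Types (a b c i j l : 'I_m) (x y z : pt m).


Lemma P1 j A : pdiff_on Om j (fun z => F z A).
Proof. by have [_ H] := hF A; have [H1 _] := H j. Qed.
Lemma P2 j c A : pdiff_on Om j (pd c (fun z => F z A)).
Proof. have [_ H] := hF A; have [_ [_ H2]] := H c; by have [H3 _] := H2 j. Qed.
Lemma P3 j b c A : pdiff_on Om j (pd b (pd c (fun z => F z A))).
Proof.
have [_ H] := hF A; have [_ [_ H2]] := H c; have [_ [_ H3]] := H2 b; by have [H4 _] := H3 j.
Qed.
Lemma Ck2f A : Ck 2 Om (fun z => F z A).
Proof. exact: Ck_mono (hF A). Qed.
Lemma Ck2pf c A : Ck 2 Om (pd c (fun z => F z A)).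
Proof. have [_ H] := hF A; by have [_ H2] := H c. Qed.

Definition S b c z := pdCl b (pdCl c F) z.
Definition T a b c z := pdCl a (pdCl b (pdCl c F)) z.

Lemma CDL_F j y : Om y -> CDL j F y (pdCl j F y).
Proof. move=> Hy C; exact: DL_pd (P1 j C) Hy. Qed.
Lemma CDL_dF j c y : Om y -> CDL j (pdCl c F) y (S j c y).
Proof. move=> Hy C; exact: DL_pd (P2 j c C) Hy. Qed.
Lemma CDL_S j b c y : Om y -> CDL j (S b c) y (T j b c y).
Proof. move=> Hy C; exact: DL_pd (P3 j b c C) Hy. Qed.

Lemma S_sym b c y : Om y -> S b c y = S c b y.
Proof. move=> Hy; apply: functional_extensionality => A; exact: schwarz hOm (Ck2f A) b c y Hy. Qed.
Lemma T_sym12 a b c y : Om y -> T a b c y = T b a c y.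
Proof. move=> Hy; apply: functional_extensionality => A; exact: schwarz hOm (Ck2pf c A) a b y Hy. Qed.
Lemma T_sym23 a b c y : Om y -> T a b c y = T a c b y.
Proof.
move=> Hy; apply: functional_extensionality => A.
rewrite /T /pdCl /=.
apply: pd_eq; apply: (DL_ext hOm Hy _ (DL_pd (P3 a c b A) Hy)) => z Hz.
exact: schwarz hOm (Ck2f A) c b z Hz.
Qed.

Lemma S_kvec b c y : Om y -> is_kvector m./2 (S b c y).
Proof.
move=> Hy A HA; rewrite /S /pdCl.
apply: (pd_zero _ hOm) => // z Hz; apply: (pd_zero _ hOm) => // w Hw; exact: hk.
Qed.

Lemma tau_S b c y : Om y -> tau (S b c y) = @cl_zero m.
Proof. move=> Hy; exact: tau_kvec hkk (S_kvec b c Hy). Qed.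

Lemma Good_F : Good Om F.
Proof. move=> j y Hy; exact: CDL_F. Qed.

Lemma d1l : dirac_l F = fun z => cl_sum (fun c => Le c (pdCl c F z)).
Proof. apply: functional_extensionality => z; exact: dirac_lE. Qed.

Lemma CDL_dlF j y : Om y -> CDL j (dirac_l F) y (cl_sum (fun c => Le c (S j c y))).
Proof. move=> Hy; rewrite d1l; apply: CDL_sum => c; apply: CDL_Le; exact: CDL_dF. Qed.

Lemma Good_dlF : Good Om (dirac_l F).
Proof. apply: Good_of => j y Hy; eexists; exact: CDL_dlF. Qed.

Lemma d2l y : Om y -> dirac_l (dirac_l F) y = cl_sum (fun b => Le b (cl_sum (fun c => Le c (S b c y)))).
Proof. move=> Hy; rewrite dirac_lE; apply: cl_sum_ext => b; by rewrite (pdCl_eq (CDL_dlF b Hy)). Qed.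

Lemma CDL_dl2F a y : Om y -> CDL a (dirac_l (dirac_l F)) y
   (cl_sum (fun b => Le b (cl_sum (fun c => Le c (T a b c y))))).
Proof.
move=> Hy; apply: (CDL_ext hOm Hy (G := fun z => cl_sum (fun b => Le b (cl_sum (fun c => Le c (S b c z)))))).
  by move=> z Hz; rewrite d2l.
apply: CDL_sum => b; apply: CDL_Le; apply: CDL_sum => c; apply: CDL_Le; exact: CDL_S.
Qed.

Lemma Good_dl2F : Good Om (dirac_l (dirac_l F)).
Proof. apply: Good_of => j y Hy; eexists; exact: CDL_dl2F. Qed.

Lemma d3l y : Om y -> dirac_l (dirac_l (dirac_l F)) y =
  cl_sum (fun a => Le a (cl_sum (fun b => Le b (cl_sum (fun c => Le c (T a b c y)))))).
Proof. move=> Hy; rewrite dirac_lE; apply: cl_sum_ext => a; by rewrite (pdCl_eq (CDL_dl2F a Hy)). Qed.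

Lemma d3l_nf y : Om y -> dirac_l (dirac_l (dirac_l F)) y =
  cl_opp (cl_sum (fun a => Le a (cl_sum (fun b => T a b b y)))).
Proof.
move=> Hy; rewrite d3l // -cl_sum_opp; apply: cl_sum_ext => a.
rewrite Lsum_anti ?Le_opp // => b c; exact: T_sym23.
Qed.

Lemma d2l_nf y : Om y -> dirac_l (dirac_l F) y = cl_opp (cl_sum (fun b => S b b y)).
Proof. move=> Hy; rewrite d2l // Lsum_anti // => b c; exact: S_sym. Qed.

Definition Inf z := cl_sum (fun p : 'I_m * 'I_m =>
     cl_mul (cl_mul (cl_e p.1) (pdCl p.1 (pdCl p.2 F) z)) (cl_e p.2)).

Lemma InfE z : Inf z = cl_sum (fun a => cl_sum (fun b => Le a (Re b (S a b z)))).
Proof.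
rewrite /Inf -(cl_sum_pair (fun a b => Le a (Re b (S a b z)))).
apply: cl_sum_ext => p; by rewrite mul_eL mul_eR LR_comm.
Qed.

Lemma CDL_Inf l y : Om y -> CDL l Inf y (cl_sum (fun a => cl_sum (fun b => Le a (Re b (T l a b y))))).
Proof.
move=> Hy; apply: (CDL_ext hOm Hy (G := fun z => cl_sum (fun a => cl_sum (fun b => Le a (Re b (S a b z)))))).
  by move=> z _; rewrite InfE.
apply: CDL_sum => a; apply: CDL_sum => b; apply: CDL_Le; apply: CDL_Re; exact: CDL_S.
Qed.

Lemma Inf_d l y : zero_on Om Inf -> Om y ->
  cl_sum (fun a => cl_sum (fun b => Le a (Re b (T l a b y)))) = @cl_zero m.
Proof.
move=> HI Hy.
rewrite -(pdCl_eq (CDL_Inf l Hy)).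
apply: pdCl_eq; apply: (CDL_ext hOm Hy (G := fun _ => @cl_zero m)); last exact: CDL_const.
move=> z Hz; apply: functional_extensionality => A; by rewrite (HI z Hz A).
Qed.

Lemma cl_opp_zero : cl_opp (@cl_zero m) = @cl_zero m.
Proof. apply: functional_extensionality => C; rewrite /cl_opp /cl_zero; lra. Qed.

Lemma L1_of_inf y : zero_on Om Inf -> Om y -> dirac_l (dirac_l (dirac_l F)) y = @cl_zero m.
Proof.
move=> HI Hy.
have E : cl_sum (fun l => Re l (cl_sum (fun a => cl_sum (fun b => Le a (Re b (T l a b y))))))
         = @cl_zero m.
  rewrite (cl_sum_ext (g := fun _ => @cl_zero m)); first exact: cl_sum_zero.
  by move=> l; rewrite Inf_d // Re_zero.
rewrite d3l_nf // -E.
rewrite [RHS](cl_sum_ext (g := fun l => cl_sum (fun a => Le a (Re l (cl_sum (fun b => Re b (T l a b y))))))); last first.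
  move=> l; rewrite Re_sum; apply: cl_sum_ext => a; rewrite !Re_sum Le_sum.
  apply: cl_sum_ext => b; by rewrite [RHS]LR_comm.
rewrite cl_sum_exch -cl_sum_opp; apply: cl_sum_ext => a.
rewrite -Le_sum -Le_opp; congr Le.
rewrite Rsum_anti; last first.
  move=> l b; rewrite T_sym12 // T_sym23 // T_sym12 //.
congr cl_opp; apply: cl_sum_ext => b; by rewrite T_sym12.
Qed.

Let P := fun z => cl_mul (F z) (cl_vec z).

Lemma PE : P = mulx F.
Proof. apply: functional_extensionality => z; by rewrite /P mul_vec. Qed.

Lemma cl_add0 (u : Cl m) : cl_add u (@cl_zero m) = u.
Proof. apply: functional_extensionality => C; rewrite /cl_add /cl_zero; lra. Qed.

Lemma cl_0add (u : Cl m) : cl_add (@cl_zero m) u = u.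
Proof. apply: functional_extensionality => C; rewrite /cl_add /cl_zero; lra. Qed.

Lemma tau_F y : Om y -> tau (F y) = @cl_zero m.
Proof. move=> Hy; exact: tau_kvec hkk (hk Hy). Qed.

Lemma dlP1 y : Om y -> dirac_l P y = mulx (dirac_l F) y.
Proof. move=> Hy; by rewrite PE (dl_mulx Good_F Hy) tau_F // cl_add0. Qed.

Lemma dlP2 y : Om y -> dirac_l (dirac_l P) y =
  cl_add (mulx (dirac_l (dirac_l F)) y) (tau (dirac_l F y)).
Proof.
move=> Hy; rewrite (dl_ext hOm (Good_mulx Good_dlF) dlP1 Hy).
exact: dl_mulx Good_dlF Hy.
Qed.

Lemma tau_opp (u : Cl m) : tau (cl_opp u) = cl_opp (tau u).
Proof. by rewrite /tau -cl_sum_opp; apply: cl_sum_ext => a; rewrite Re_opp Le_opp. Qed.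
Lemma tau_sum (I : finType) (g : I -> Cl m) : tau (cl_sum g) = cl_sum (fun q => tau (g q)).
Proof.
rewrite /tau (cl_sum_ext (g := fun a => cl_sum (fun q => Le a (Re a (g q))))).
  exact: cl_sum_exch.
by move=> a; rewrite Re_sum Le_sum.
Qed.

Lemma sumS_kvec y : Om y -> is_kvector m./2 (cl_sum (fun b => S b b y)).
Proof. move=> Hy A HA; rewrite /cl_sum; apply: sum0 => b _; exact: S_kvec. Qed.


Lemma dlP3 y : Om y -> dirac_l (dirac_l (dirac_l P)) y =
  cl_add (mulx (dirac_l (dirac_l (dirac_l F))) y) (cl_scale (-2) (Inf y)).
Proof.
move=> Hy.
have G1 : Good Om (fun z => cl_add (mulx (dirac_l (dirac_l F)) z) (tau (dirac_l F z))).
  apply: Good_add; [exact: Good_mulx Good_dl2F | exact: Good_tau Good_dlF].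
rewrite (dl_ext hOm G1 dlP2 Hy).
rewrite (dl_add (Good_mulx Good_dl2F) (Good_tau Good_dlF) Hy).
rewrite (dl_mulx Good_dl2F Hy).
rewrite d2l_nf // tau_opp (tau_kvec hkk (sumS_kvec Hy)) cl_opp_zero cl_add0.
congr cl_add.
rewrite (dl_tau Good_dlF Hy) InfE -cl_sum_scale; apply: cl_sum_ext => a.
rewrite (pdCl_eq (CDL_dlF a Hy)) tau_sum Le_sum -cl_sum_scale; apply: cl_sum_ext => b.
rewrite tau_Le tau_S // Le_zero cl_opp_zero.
by rewrite cl_0add Le_scale.
Qed.

Lemma d1r : dirac_r F = fun z => cl_sum (fun c => Re c (pdCl c F z)).
Proof. apply: functional_extensionality => z; exact: dirac_rE. Qed.

Lemma CDL_drF j y : Om y -> CDL j (dirac_r F) y (cl_sum (fun c => Re c (S j c y))).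
Proof. move=> Hy; rewrite d1r; apply: CDL_sum => c; apply: CDL_Re; exact: CDL_dF. Qed.

Lemma Good_drF : Good Om (dirac_r F).
Proof. apply: Good_of => j y Hy; eexists; exact: CDL_drF. Qed.

Lemma d2r y : Om y -> dirac_r (dirac_r F) y = cl_sum (fun b => Re b (cl_sum (fun c => Re c (S b c y)))).
Proof. move=> Hy; rewrite dirac_rE; apply: cl_sum_ext => b; by rewrite (pdCl_eq (CDL_drF b Hy)). Qed.

Lemma CDL_dr2F a y : Om y -> CDL a (dirac_r (dirac_r F)) y
   (cl_sum (fun b => Re b (cl_sum (fun c => Re c (T a b c y))))).
Proof.
move=> Hy; apply: (CDL_ext hOm Hy (G := fun z => cl_sum (fun b => Re b (cl_sum (fun c => Re c (S b c z)))))).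
  by move=> z Hz; rewrite d2r.
apply: CDL_sum => b; apply: CDL_Re; apply: CDL_sum => c; apply: CDL_Re; exact: CDL_S.
Qed.

Lemma Good_dr2F : Good Om (dirac_r (dirac_r F)).
Proof. apply: Good_of => j y Hy; eexists; exact: CDL_dr2F. Qed.

Lemma d3r y : Om y -> dirac_r (dirac_r (dirac_r F)) y =
  cl_sum (fun a => Re a (cl_sum (fun b => Re b (cl_sum (fun c => Re c (T a b c y)))))).
Proof. move=> Hy; rewrite dirac_rE; apply: cl_sum_ext => a; by rewrite (pdCl_eq (CDL_dr2F a Hy)). Qed.

Lemma d3r_nf y : Om y -> dirac_r (dirac_r (dirac_r F)) y =
  cl_opp (cl_sum (fun a => Re a (cl_sum (fun b => T a b b y)))).
Proof.
move=> Hy; rewrite d3r // -cl_sum_opp; apply: cl_sum_ext => a.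
rewrite Rsum_anti ?Re_opp // => b c; exact: T_sym23.
Qed.

Lemma d2r_nf y : Om y -> dirac_r (dirac_r F) y = cl_opp (cl_sum (fun b => S b b y)).
Proof. move=> Hy; rewrite d2r // Rsum_anti // => b c; exact: S_sym. Qed.

Lemma R1_of_inf y : zero_on Om Inf -> Om y -> dirac_r (dirac_r (dirac_r F)) y = @cl_zero m.
Proof.
move=> HI Hy.
have E : cl_sum (fun l => Le l (cl_sum (fun a => cl_sum (fun b => Le a (Re b (T l a b y))))))
         = @cl_zero m.
  rewrite (cl_sum_ext (g := fun _ => @cl_zero m)); first exact: cl_sum_zero.
  by move=> l; rewrite Inf_d // Le_zero.
rewrite d3r_nf // -E.
rewrite [RHS](cl_sum_ext (g := fun l => cl_sum (fun b => Re b (Le l (cl_sum (fun a => Le a (T l a b y))))))); last first.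
  move=> l; rewrite Le_sum.
  rewrite (cl_sum_ext (g := fun a => cl_sum (fun b => Re b (Le l (Le a (T l a b y)))))); last first.
    move=> a; rewrite Le_sum; apply: cl_sum_ext => b; by rewrite LR_comm LR_comm.
  rewrite cl_sum_exch; apply: cl_sum_ext => b; by rewrite Le_sum Re_sum.
rewrite cl_sum_exch -cl_sum_opp; apply: cl_sum_ext => b.
rewrite -Re_sum Lsum_anti; last by move=> l a; rewrite T_sym12.
rewrite Re_opp; congr cl_opp; congr Re; apply: cl_sum_ext => l.
by rewrite T_sym12 // T_sym23.
Qed.

Let Q := fun z => cl_mul (cl_vec z) (F z).

Lemma QE : Q = xmul F.
Proof. apply: functional_extensionality => z; by rewrite /Q vec_mul. Qed.

Lemma drQ1 y : Om y -> dirac_r Q y = xmul (dirac_r F) y.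
Proof. move=> Hy; by rewrite QE (dr_xmul Good_F Hy) tau_F // cl_add0. Qed.

Lemma drQ2 y : Om y -> dirac_r (dirac_r Q) y =
  cl_add (xmul (dirac_r (dirac_r F)) y) (tau (dirac_r F y)).
Proof.
move=> Hy; rewrite (dr_ext hOm (Good_xmul Good_drF) drQ1 Hy).
exact: dr_xmul Good_drF Hy.
Qed.

Lemma drQ3 y : Om y -> dirac_r (dirac_r (dirac_r Q)) y =
  cl_add (xmul (dirac_r (dirac_r (dirac_r F))) y) (cl_scale (-2) (Inf y)).
Proof.
move=> Hy.
have G1 : Good Om (fun z => cl_add (xmul (dirac_r (dirac_r F)) z) (tau (dirac_r F z))).
  apply: Good_add; [exact: Good_xmul Good_dr2F | exact: Good_tau Good_drF].
rewrite (dr_ext hOm G1 drQ2 Hy).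
rewrite (dr_add (Good_xmul Good_dr2F) (Good_tau Good_drF) Hy).
rewrite (dr_xmul Good_dr2F Hy).
rewrite d2r_nf // tau_opp (tau_kvec hkk (sumS_kvec Hy)) cl_opp_zero cl_add0.
congr cl_add.
rewrite (dr_tau Good_drF Hy) InfE [in RHS]cl_sum_exch -cl_sum_scale; apply: cl_sum_ext => a.
rewrite (pdCl_eq (CDL_drF a Hy)) tau_sum Re_sum -cl_sum_scale; apply: cl_sum_ext => b.
rewrite tau_Re tau_S // Re_zero cl_opp_zero cl_0add Re_scale LR_comm S_sym //.
Qed.

End Main.

Section MainL.
Variables (m : nat) (Om : pt m -> Prop) (F : pt m -> Cl m).
Hypotheses (hOm : is_open Om) (hF : CkCl 3 Om F)
  (hk : forall x, Om x -> is_kvector m./2 (F x)) (hkk : (m./2 + m./2)%N = m).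

Lemma zero_fun (u : Cl m) : (forall A, u A = 0) -> u = @cl_zero m.
Proof. move=> H; apply: functional_extensionality => A; by rewrite H. Qed.

Lemma mulx_zero (G : pt m -> Cl m) y : G y = @cl_zero m -> mulx G y = @cl_zero m.
Proof.
move=> H; rewrite /mulx H (cl_sum_ext (g := fun _ => @cl_zero m)) ?cl_sum_zero // => l.
apply: zero_fun => A; rewrite Re_zero /cl_scale /cl_zero; lra.
Qed.

Lemma left_equiv : inframonogenic Om F <->
  left_3_monogenic Om F /\ left_3_monogenic Om (fun x => cl_mul (F x) (cl_vec x)).
Proof.
split.
- move=> HI; have HI' : zero_on Om (Inf F) by [].
  have L1 : forall y, Om y -> dirac_l (dirac_l (dirac_l F)) y = @cl_zero m.
    by move=> y Hy; exact: (L1_of_inf hOm hF HI' Hy).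
  split.
  + move=> y Hy A; by rewrite L1.
  + move=> y Hy A; rewrite (dlP3 hOm hF hk hkk Hy) (mulx_zero (L1 y Hy)).
    rewrite (zero_fun (HI' y Hy)) /cl_add /cl_scale /cl_zero; lra.
- case=> H1 H2 y Hy A; have := H2 y Hy A.
  rewrite (dlP3 hOm hF hk hkk Hy) (mulx_zero (zero_fun (H1 y Hy))).
  rewrite /cl_add /cl_scale /cl_zero => H; rewrite /Inf in H; lra.
Qed.

Lemma xmul_zero (G : pt m -> Cl m) y : G y = @cl_zero m -> xmul G y = @cl_zero m.
Proof.
move=> H; rewrite /xmul H (cl_sum_ext (g := fun _ => @cl_zero m)) ?cl_sum_zero // => l.
apply: zero_fun => A; rewrite Le_zero /cl_scale /cl_zero; lra.
Qed.

Lemma right_equiv : inframonogenic Om F <->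
  right_3_monogenic Om F /\ right_3_monogenic Om (fun x => cl_mul (cl_vec x) (F x)).
Proof.
split.
- move=> HI; have HI' : zero_on Om (Inf F) by [].
  have R1 : forall y, Om y -> dirac_r (dirac_r (dirac_r F)) y = @cl_zero m.
    by move=> y Hy; exact: (R1_of_inf hOm hF HI' Hy).
  split.
  + move=> y Hy A; by rewrite R1.
  + move=> y Hy A; rewrite (drQ3 hOm hF hk hkk Hy) (xmul_zero (R1 y Hy)).
    rewrite (zero_fun (HI' y Hy)) /cl_add /cl_scale /cl_zero; lra.
- case=> H1 H2 y Hy A; have := H2 y Hy A.
  rewrite (drQ3 hOm hF hk hkk Hy) (xmul_zero (zero_fun (H1 y Hy))).
  rewrite /cl_add /cl_scale /cl_zero => H; rewrite /Inf in H; lra.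
Qed.

End MainL.

Theorem mainTheorem10 (m : nat) (hm : ~~ odd m) (Om : pt m -> Prop) (F : pt m -> Cl m)
  (hOm : is_open Om) (hF : CkCl 3 Om F)
  (hk : forall x, Om x -> is_kvector m./2 (F x)) :
  (inframonogenic Om F <->
     left_3_monogenic Om F /\ left_3_monogenic Om (fun x => cl_mul (F x) (cl_vec x))) /\
  (inframonogenic Om F <->
     right_3_monogenic Om F /\ right_3_monogenic Om (fun x => cl_mul (cl_vec x) (F x))).
Proof.
have hkk : (m./2 + m./2)%N = m.
  by rewrite addnn -[RHS](odd_double_half m) (negbTE hm).
split; [exact: left_equiv | exact: right_equiv].
Qed.
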